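(* Let $n,d,a$ be positive integers and $g:=\gcd(d,n)$. If $g\nmid a$, then the triple $(n,d,a)$ is bad.
   Context: Let $R=\mathbb{C}[x_1,\dots,x_n]$ with $\mathfrak{S}_n$ permuting the variables and $R_a^{\mathfrak{S}_n}$ the symmetric polynomials homogeneous of degree $a$. A triple $(n,d,a)$ of positive integers is good if there exists $f\in R_a^{\mathfrak{S}_n}$ such that $x_1^d-x_n^d,\dots,x_{n-1}^d-x_n^d,f$ is a regular sequence (equivalently, $f$ has no zero on $\mathcal{V}_d=\{(z_1,\dots,z_n)\in\mathbb{C}^n: z_i^d=1\ \forall i,\ z_n=1\}$); otherwise it is bad. *)

(* Defs.v *)
(* multinomials' mpoly over the complex numbers R[i]
   (complex R from mathcomp-real-closed, R an arbitrary real closed field;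
   for R the real numbers this is C). *)
From HB Require Import structures.
From mathcomp Require Import all_boot all_order all_algebra.
From mathcomp Require Import mpoly complex.
Set Implicit Arguments. Unset Strict Implicit. Unset Printing Implicit Defensive.
Import Order.TTheory GRing.Theory Num.Theory.
Local Open Scope ring_scope.

(* V_d = { z in C^n : z_i^d = 1 for all i, and z_n = 1 }.
   Variables x_1..x_n are indexed by 'I_n; x_n is the index with value n-1. *)
Definition inVd (R : rcfType) (n d : nat) (z : 'I_n -> R[i]) : Prop :=
  (forall i : 'I_n, z i ^+ d = 1) /\
  (forall i : 'I_n, nat_of_ord i = n.-1 -> z i = 1).

Definition good (R : rcfType) (n d k : nat) : Prop :=
  exists f : {mpoly R[i][n]},
    f \is symmetric /\ f \is k.-homog /\
    (forall z : 'I_n -> R[i], inVd d z -> f.@[z] != 0).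

Definition bad (R : rcfType) (n d a : nat) : Prop := ~ good R n d a.

(* Main.v *)
Require Import Defs.
From HB Require Import structures.
From mathcomp Require Import all_boot all_order all_algebra all_fingroup all_solvable all_field.
From mathcomp Require Import mpoly complex.
Set Implicit Arguments. Unset Strict Implicit. Unset Printing Implicit Defensive.
Import Order.TTheory GRing.Theory Num.Theory.
Local Open Scope ring_scope.

Lemma prim_root_exists_Ri (R : rcfType) n : (n > 0)%N -> exists z : R[i], n.-primitive_root z.
Proof.
pose p : {poly R[i]} := 'X^n - 1; have [r Dp] := closed_field_poly_normal p.
move=> n_gt0; rewrite (monicP _) ?monicXnsubC // scale1r in Dp.
have rn1: all n.-unity_root r by apply/allP=> z; rewrite -root_prod_XsubC -Dp.
have sz_r: (n < (size r).+1)%N.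
  by rewrite -(size_prod_XsubC r id) -Dp size_XnsubC.
have [|z] := hasP (has_prim_root n_gt0 rn1 _ sz_r); last by exists z.
by rewrite -separable_prod_XsubC -Dp separable_Xn_sub_1 // pnatr_eq0 -lt0n.
Qed.

Lemma meval_msym (R : rcfType) n (s : 'S_n) (p : {mpoly R[i][n]}) v :
  (msym s p).@[v] = p.@[fun i => v (s i)].
Proof.
rewrite /msym /mmap raddf_sum /= mevalE; apply: eq_bigr => m _.
rewrite mevalM mevalC /mmap1 rmorph_prod /=; congr (_ * _).
by apply: eq_bigr => i _; rewrite rmorphXn /= mevalXU.
Qed.

Lemma meval_homog (R : rcfType) n k (p : {mpoly R[i][n]}) v c :
  p \is k.-homog -> p.@[fun i => c * v i] = c ^+ k * p.@[v].
Proof.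
move=> /dhomog_mf H; rewrite !mevalE mulr_sumr big_seq [RHS]big_seq.
apply: eq_bigr => m /H <-.
rewrite mulrCA; congr (_ * _).
rewrite (eq_bigr (fun i => c ^+ m i * v i ^+ m i)); last by move=> i _; rewrite exprMn.
by rewrite big_split /= prodrXr mdegE.
Qed.


Theorem proposition3p15 (R : rcfType) (n d a : nat) :
  (0 < n)%N -> (0 < d)%N -> (0 < a)%N ->
  ~~ (gcdn d n %| a)%N -> bad R n d a.
Proof.
move=> n0 d0 a0 ndiv [f [fsym [fhom fnz]]].
set g := gcdn d n in ndiv.
have g0 : (0 < g)%N by rewrite gcdn_gt0 d0.
have [w pw] := prim_root_exists_Ri R g0.
pose z := fun i : 'I_n => w ^+ i.+1.
have wn : w ^+ n = 1 by apply/eqP; rewrite -(prim_order_dvd pw) dvdn_gcdr.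
have zV : inVd d z.
  split=> i.
    rewrite /z -exprM mulnC exprM.
    have -> : w ^+ d = 1 by apply/eqP; rewrite -(prim_order_dvd pw) dvdn_gcdl.
    by rewrite expr1n.
  by rewrite /z; move=> ->; rewrite prednK.
have := fnz z zV; apply/negP; rewrite negbK.
pose s : 'S_n := perm (@ordS_inj n).
have Hs : (fun i => z (s i)) =1 (fun i => w * z i).
  move=> i; rewrite /z permE /= -exprS.
  apply/eqP; rewrite (eq_prim_root_expr pw) /=.
  by apply/eqP; rewrite -[(_ %% n).+1]addn1 -modnDm modn_dvdm ?dvdn_gcdr // modnDm addn1.
have E : f.@[z] = w ^+ a * f.@[z].
  rewrite -(meval_homog z w fhom) -(meval_eq _ Hs) -meval_msym.
  by move/issymP: fsym => ->.
have : (1 - w ^+ a) * f.@[z] = 0 by rewrite mulrBl mul1r -E subrr.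
move/eqP; rewrite mulf_eq0 => /orP [|//].
by rewrite subr_eq0 eq_sym -(prim_order_dvd pw) (negbTE ndiv).
Qed.
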